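(* Assume the travel times $\tau$ have a convex potential $\Phi$, all externality functions $g_{i,p,j}$ are constant, and let $B$ be a Pareto-minimal budget vector. Then a feasible flow $x\in\mathcal F$ is implementable and respects $B$ if and only if $x$ is an optimal solution of \[ \min_{y\in\mathcal F}\Phi(y)\quad\text{s.t.}\quad G_j(y)\le B_j\ \text{ for all } j\in J. \]
   Context: Let $G=(V,E)$ be a directed graph and $I$ a finite set of commodities; commodity $i$ has source $s_i$, sink $t_i$, demand $d_i>0$; $\mathcal P_i$ is its set of simple $s_i$–$t_i$ paths, $\mathcal P=\{(i,p)\}$. A flow $x\in\mathbb{R}^{\mathcal P}_{\ge0}$ is feasible if $\sum_{p\in\mathcal P_i}x_{i,p}=d_i$ for all $i$; $\mathcal F$ is the set of feasible flows. $J$ is a finite set of externality classes with constant externality factors $g_{i,p,j}\ge0$, $G_j(x)=\sum_{(i,p)}g_{i,p,j}x_{i,p}$; travel times $\tau_{i,p}:\mathcal F\to\mathbb{R}$ with a potential, i.e., a differentiable $\Phi:\mathbb{R}^{\mathcal P}\to\mathbb{R}$ with $\tau_{i,p}(x)=\partial\Phi/\partial x_{i,p}(x)$ on $\mathcal F$, here convex. For $\lambda\in\mathbb{R}^J_{\ge0}$, $c^\lambda_{i,p}=\tau_{i,p}+\sum_j\lambda_jg_{i,p,j}$; $x\in\mathrm{WE}(\lambda)$ means $x\in\mathcal F$ and $x_{i,p}>0$ implies $c^\lambda_{i,p}(x)\le c^\lambda_{i,q}(x)$ for all $q\in\mathcal P_i$. $x$ is implementable if $x\in\mathrm{WE}(\lambda)$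 for some $\lambda\in\mathbb{R}^J_{\ge0}$, and respects $B$ if $G_j(x)\le B_j$ for all $j$. A budget $B$ is feasible if some feasible flow respects it, and Pareto-minimal if it is feasible and no other feasible $B'\ne B$ has $B'_j\le B_j$ for all $j$. *)

(* Defs.v *)
From HB Require Import structures.
From mathcomp Require Import all_boot all_order all_algebra.
From mathcomp Require Import all_classical all_reals all_analysis.
Set Implicit Arguments. Unset Strict Implicit. Unset Printing Implicit Defensive.
Import Order.TTheory GRing.Theory Num.Theory.
Import numFieldNormedType.Exports.
Local Open Scope ring_scope.

(** Sequences of length at most #|V|, as a finite type (every simple path
    of a graph on V has at most #|V| vertices). *)
Definition bseq (V : finType) : finType := {n : 'I_#|V|.+1 & n.-tuple V}.
Definition bseq_val (V : finType) (b : bseq V) : seq V := tagged b.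

Definition is_simple_path (V : finType) (E : rel V) (s t : V) (p : seq V) : bool :=
  if p is x :: p' then [&& x == s, path E x p', last x p' == t & uniq p]
  else false.

Section Model.
Variables (R : realType) (V : finType) (E : rel V) (I : finType) (s t : I -> V).

Definition PT : finType :=
  {ip : I * bseq V | is_simple_path E (s ip.1) (t ip.1) (bseq_val ip.2)}.

Definition com (ip : PT) : I := (sval ip).1.

Definition flow := 'rV[R]_#|PT|.
Definition fx (x : flow) (ip : PT) : R := x ord0 (enum_rank ip).
Definition unitv (ip : PT) : flow := delta_mx ord0 (enum_rank ip).

Variable (d : I -> R).
Definition feasible (x : flow) : Prop :=
  (forall ip, 0 <= fx x ip) /\
  (forall i, \sum_(ip : PT | com ip == i) fx x ip = d i).

Variables (J : finType) (g : PT -> J -> R).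
Definition Gext (x : flow) (j : J) : R := \sum_(ip : PT) g ip j * fx x ip.

Variable (tau : PT -> flow -> R).
Definition cost (lam : J -> R) (ip : PT) (x : flow) : R :=
  tau ip x + \sum_(j : J) lam j * g ip j.

Definition WE (lam : J -> R) (x : flow) : Prop :=
  feasible x /\
  forall ip iq : PT, com ip = com iq -> 0 < fx x ip -> cost lam ip x <= cost lam iq x.

Definition implementable (x : flow) : Prop :=
  exists lam : J -> R, (forall j, 0 <= lam j) /\ WE lam x.

Definition respects (B : J -> R) (x : flow) : Prop := forall j, Gext x j <= B j.

Definition feasible_budget (B : J -> R) : Prop := exists y, feasible y /\ respects B y.

Definition pareto_minimal (B : J -> R) : Prop :=
  feasible_budget B /\
  forall B' : J -> R, feasible_budget B' -> (forall j, B' j <= B j) -> B' = B.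

Definition is_potential (Phi : flow -> R) : Prop :=
  (forall x : flow, differentiable Phi x) /\
  (forall x, feasible x -> forall ip, tau ip x = 'D_(unitv ip) Phi x).

Definition optimal (Phi : flow -> R) (B : J -> R) (x : flow) : Prop :=
  feasible x /\ respects B x /\
  forall y, feasible y -> respects B y -> Phi x <= Phi y.
End Model.

Definition convex_fun (R : realType) (n : nat) (Phi : 'rV[R]_n -> R) : Prop :=
  @convex_function R 'rV[R]_n setT Phi.

(* Main.v *)
Require Import Defs.
From HB Require Import structures.
From mathcomp Require Import all_boot all_order all_algebra.
From mathcomp Require Import all_classical all_reals all_analysis.
From mathcomp Require Import ring lra.
Import Order.TTheory GRing.Theory Num.Theory.
Import numFieldNormedType.Exports.
Local Open Scope ring_scope.
Local Open Scope classical_set_scope.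

Definition lin (R : pzRingType) (W : lmodType R) (f : W -> R) :=
  forall r y z, f (r *: y + z) = r * f y + f z.
Arguments lin {R W} f.

Lemma lin0 {R : realFieldType} {W : lmodType R} {f : W -> R} : lin f -> f 0 = 0.
Proof. move=> H; have := H 1 0 0; rewrite scaler0 addr0 mul1r => h; lra. Qed.

Lemma linN {R : realFieldType} {W : lmodType R} {f : W -> R} y : lin f -> f (- y) = - f y.
Proof. move=> H; have := H (-1) y 0; rewrite addr0 scaleN1r (lin0 H) => ->; lra. Qed.

Lemma widen_lift m (j : 'I_m) : widen_ord (leqnSn m) j = lift ord_max j.
Proof. by apply: ord_inj; rewrite lift_max. Qed.

Lemma unlift_widen m (j : 'I_m) : unlift ord_max (widen_ord (leqnSn m) j) = Some j.
Proof. by rewrite widen_lift liftK. Qed.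

Lemma ord_splitP {m} (P : 'I_m.+1 -> Prop) :
  P ord_max -> (forall j, P (widen_ord (leqnSn m) j)) -> forall k, P k.
Proof.
move=> Hm Hw k; case: (unliftP ord_max k) => [j ->|->] //.
by rewrite -widen_lift.
Qed.

Lemma farkas {R : realFieldType} {W : lmodType R} m :
  forall (a : 'I_m -> W -> R) (c : W -> R),
  (forall k, lin (a k)) -> lin c ->
  (forall y, (forall k, 0 <= a k y) -> 0 <= c y) ->
  exists mu : 'I_m -> R, (forall k, 0 <= mu k) /\
    forall y, c y = \sum_k mu k * a k y.
Proof.
elim: m => [|m IH] a c Ha Hc Hy.
  exists (fun _ => 0); split => // y; rewrite big_ord0.
  have h1 := Hy y (fun k => match k with Ordinal _ h => ltac:(done) end).
  have h2 := Hy (-y) (fun k => match k with Ordinal _ h => ltac:(done) end).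
  rewrite (linN _ Hc) in h2; lra.
pose a' k := a (widen_ord (leqnSn m) k); pose al := a ord_max.
have Ha' : forall k, lin (a' k) by move=> k; exact: Ha.
have Hal : lin al by exact: Ha.
have [Hall|Hn] := pselect (forall y, (forall k, 0 <= a' k y) -> 0 <= c y).
  have [mu [mu0 Hmu]] := IH a' c Ha' Hc Hall.
  exists (fun k => if unlift ord_max k is Some k' then mu k' else 0); split.
    by move=> k; case: (unlift _ _).
  move=> y; rewrite big_ord_recr /= unlift_none mul0r addr0 Hmu.
  by apply: eq_bigr => k _; rewrite unlift_widen.
move/existsNP: Hn => [y0 /not_implyP [H0 /negP]]; rewrite -ltNge => cy0.
set q := al y0.
have q0 : q < 0.
  rewrite ltNge; apply/negP => q0; have : 0 <= c y0; last by lra.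
  apply: Hy; apply: ord_splitP => //.
pose a'' k y := a' k y - a' k y0 / q * al y.
pose c' y := c y - c y0 / q * al y.
have Ha'' : forall k, lin (a'' k).
  by move=> k r y z; rewrite /a'' Ha' Hal; ring.
have Hc' : lin c' by move=> r y z; rewrite /c' Hc Hal; ring.
have Hy' : forall y, (forall k, 0 <= a'' k y) -> 0 <= c' y.
  move=> y Hk; pose z := (- (al y / q)) *: y0 + y.
  have Ez : forall k, a' k z = a'' k y by move=> k; rewrite /z Ha' /a''; ring.
  have Elz : al z = 0.
    rewrite /z Hal -/q; field; lra.
  have Ecz : c z = c' y by rewrite /z Hc /c'; ring.
  rewrite -Ecz; apply: Hy; apply: ord_splitP.
    by rewrite -/al Elz.
  by move=> j; rewrite -/(a' j) Ez.
have [mu [mu0 Hmu]] := IH a'' c' Ha'' Hc' Hy'.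
pose S := \sum_k mu k * a' k y0.
have S0 : 0 <= S by apply: sumr_ge0 => k _; apply: mulr_ge0.
exists (fun k => if unlift ord_max k is Some k' then mu k' else (c y0 - S) / q); split.
  move=> k; case: (unlift _ _) => // .
  rewrite -mulrNN; apply: mulr_ge0; first by lra.
  rewrite -invrN invr_ge0; lra.
move=> y; rewrite big_ord_recr /= unlift_none.
under eq_bigr => k _ do rewrite unlift_widen.
have Ec : c y = c' y + c y0 / q * al y by rewrite /c'; ring.
rewrite Ec Hmu /a'' /S.
have -> : \sum_k mu k * (a' k y - a' k y0 / q * al y) =
   \sum_k mu k * a' k y - (\sum_k mu k * a' k y0) / q * al y.
  by rewrite !mulr_suml -sumrB; apply: eq_bigr => k _; ring.
rewrite -/al; field; lra.
Qed.

Lemma dir_right (R : realType) (V : normedModType R) (f : V -> R) x v :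
  differentiable f x ->
  (fun h : R => h^-1 *: ((f \o shift x) (h *: v) - f x)) @ 0^'+ --> 'D_v f x.
Proof.
move=> df.
have cvfx := @diff_derivable _ _ _ f x v df.
have := cvfx; rewrite /derivable => /cvg_ex [l Hl].
have Hl' := Hl.
rewrite /derive (cvg_lim _ Hl); last exact: Rhausdorff.
move=> A /Hl /nbhs_ballP [_ /posnumP[e] xe_A].
by exists e%:num => //= y xe_y; rewrite lt_def => /andP [xney _]; apply: xe_A.
Qed.

Lemma dir_ge (R : realType) (V : normedModType R) (f : V -> R) x v C e :
  differentiable f x -> 0 < e ->
  (forall t, 0 < t < e -> C <= t^-1 * (f (x + t *: v) - f x)) -> C <= 'D_v f x.
Proof.
move=> df e0 H.
have Hc := @dir_right _ _ f x v df.
apply: (cvgr_to_ge Hc).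
near=> t.
have Ht : 0 < t < e -> C <= t^-1 * (f (t *: v + x) - f x) by rewrite [t *: v + x]addrC; exact: H.
apply: Ht; apply/andP; split.
  by near: t; exists 1 => //= y _ /=.
near: t; exists e => //= y /= + y0.
by rewrite sub0r normrN gtr0_norm.
Unshelve. all: by end_near.
Qed.

Lemma dir_le (R : realType) (V : normedModType R) (f : V -> R) x v C e :
  differentiable f x -> 0 < e ->
  (forall t, 0 < t < e -> t^-1 * (f (x + t *: v) - f x) <= C) -> 'D_v f x <= C.
Proof.
move=> df e0 H.
have Hc := @dir_right _ _ f x v df.
apply: (cvgr_to_le Hc).
near=> t.
have Ht : 0 < t < e -> t^-1 * (f (t *: v + x) - f x) <= C by rewrite [t *: v + x]addrC; exact: H.
apply: Ht; apply/andP; split.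
  by near: t; exists 1 => //= y _ /=.
near: t; exists e => //= y /= + y0.
by rewrite sub0r normrN gtr0_norm.
Unshelve. all: by end_near.
Qed.

Lemma conv_grad (R : realType) n (f : 'rV[R]_n -> R) x y :
  convex_fun f -> differentiable f x -> 'D_(y - x) f x <= f y - f x.
Proof.
move=> cf df; apply: (@dir_le _ _ f x (y - x) (f y - f x) 1 df ltr01) => t /andP [t0 t1].
have := cf (Itv01 (ltW t0) (ltW t1)) y x (in_setT _) (in_setT _).
rewrite convRE /= /unstable.onem.
move=> H.
have E : (t *: y + (1 - t) *: x : 'rV[R]_n) = x + t *: (y - x).
  by rewrite scalerBl scale1r scalerBr; rewrite addrC -!addrA; congr (_ + _); rewrite addrC.
have H2 : f (x + t *: (y - x)) <= t * f y + (1 - t) * f x by rewrite -E; exact: H.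
rewrite ler_pdivrMl //; lra.
Qed.

Local Close Scope classical_set_scope.
Set Implicit Arguments. Unset Strict Implicit.


Lemma fxD (R : realType) (V : finType) (E : rel V) (I : finType) (s t : I -> V)
  (r : R) (y z : flow R E s t) ip : fx (r *: y + z) ip = r * fx y ip + fx z ip.
Proof. by rewrite /fx !mxE. Qed.

Lemma fx_unit (R : realType) (V : finType) (E : rel V) (I : finType) (s t : I -> V)
  (ip iq : PT E s t) : fx (unitv R iq) ip = (ip == iq)%:R.
Proof. by rewrite /fx /unitv mxE eqxx /= (can_eq enum_rankK). Qed.

Lemma sum_ind (R : realType) (T : finType) (P : pred T) (F : T -> R) :
  \sum_(i | P i) F i = \sum_i (P i)%:R * F i.
Proof. by rewrite big_mkcond; apply: eq_bigr => i _; case: (P i); rewrite ?mul1r ?mul0r. Qed.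

Lemma sum_eq1 (R : realType) (T : finType) (F : T -> R) (j : T) :
  \sum_i (i == j)%:R * F i = F j.
Proof.
rewrite (bigD1 j) //= eqxx mul1r big1 ?addr0 // => i /negbTE ->; by rewrite mul0r.
Qed.

Lemma sum_unit (R : realType) (V : finType) (E : rel V) (I : finType) (s t : I -> V)
  (F : PT E s t -> R) iq : \sum_ip F ip * fx (unitv R iq) ip = F iq.
Proof.
by rewrite -[RHS](sum_eq1 F iq); apply: eq_bigr => ip _; rewrite fx_unit mulrC.
Qed.

Lemma lin_sum (R : realType) (V : finType) (E : rel V) (I : finType) (s t : I -> V)
  (w : PT E s t -> R) : lin (fun v : flow R E s t => \sum_ip w ip * fx v ip).
Proof.
move=> r y z /=; rewrite mulr_sumr -big_split; apply: eq_bigr => ip _.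
rewrite fxD /=; ring.
Qed.

Lemma Dsum (R : realType) (V : finType) (E : rel V) (I : finType) (s t : I -> V)
  (d : I -> R) (tau : PT E s t -> flow R E s t -> R) (Phi : flow R E s t -> R)
  (hpot : is_potential d tau Phi) x (hx : feasible d x) (v : flow R E s t) :
  'D_v Phi x = \sum_ip fx v ip * tau ip x.
Proof.
have Ev : v = \sum_ip fx v ip *: unitv R ip.
  rewrite {1}(row_sum_delta v) (reindex (@enum_rank (PT E s t))) /=.
    by apply: eq_bigr.
  by exists enum_val => i _; [exact: enum_rankK | exact: enum_valK].
rewrite deriveE; last exact: hpot.1 x.
rewrite [in LHS]Ev linear_sum; apply: eq_bigr => ip _.
by rewrite linearZ /= -deriveE ?(hpot.2 x hx) //; exact: hpot.1.
Qed.


Lemma wardrop (R : realType) (V : finType) (E : rel V) (I : finType) (s t : I -> V)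
  (d : I -> R) (hd : forall i, 0 < d i) (x y : flow R E s t)
  (hx : feasible d x) (hy : feasible d y) (c : PT E s t -> R) :
  (forall ip iq, com ip = com iq -> 0 < fx x ip -> c ip <= c iq) ->
  \sum_ip fx x ip * c ip <= \sum_ip fx y ip * c ip.
Proof.
move=> Hc.
pose F1 ip iq := if com iq == com ip then fx x ip * fx y iq * c ip / d (com ip) else 0.
pose F2 ip iq := if com iq == com ip then fx x ip * fx y iq * c iq / d (com ip) else 0.
have E1 : forall ip, fx x ip * c ip = \sum_iq F1 ip iq.
  move=> ip; rewrite /F1 -big_mkcond /=.
  rewrite (eq_bigr (fun iq => fx y iq * (fx x ip * c ip / d (com ip)))); last first.
    by move=> iq _; ring.
  rewrite -mulr_suml hy.2; have := hd (com ip) => h; field; lra.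
have E2 : forall iq, fx y iq * c iq = \sum_ip F2 ip iq.
  move=> iq; rewrite /F2 -big_mkcond /=.
  rewrite (eq_bigr (fun ip => fx x ip * (fx y iq * c iq / d (com iq)))); last first.
    by move=> ip /eqP ->; ring.
  rewrite -mulr_suml (eq_bigl (fun ip => com ip == com iq)); last by move=> ip; rewrite eq_sym.
  rewrite hx.2; have := hd (com iq) => h; field; lra.
rewrite (eq_bigr _ (fun ip _ => E1 ip)) (eq_bigr _ (fun iq _ => E2 iq)) exchange_big /=.
apply: ler_sum => b _; apply: ler_sum => a _; rewrite /F1 /F2.
case: eqP => // hc.
have [x0|xp] := eqVneq (fx x a) 0; first by rewrite x0 !mul0r.
have xpos : 0 < fx x a by rewrite lt_def xp hx.1.
have h : c a <= c b by apply: Hc => //; rewrite hc.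
have -> : fx x a * fx y b * c a / d (com a) = (fx x a * fx y b / d (com a)) * c a by ring.
have -> : fx x a * fx y b * c b / d (com a) = (fx x a * fx y b / d (com a)) * c b by ring.
apply: ler_wpM2l => //; apply: divr_ge0; [apply: mulr_ge0; [exact: hx.1|exact: hy.1]|exact: ltW].
Qed.

Lemma cost_sum (R : realType) (V : finType) (E : rel V) (I : finType) (s t : I -> V)
  (J : finType) (g : PT E s t -> J -> R) (tau : PT E s t -> flow R E s t -> R)
  (lam : J -> R) (x z : flow R E s t) :
  \sum_ip fx z ip * cost g tau lam ip x =
  \sum_ip fx z ip * tau ip x + \sum_j lam j * Gext g z j.
Proof.
rewrite /cost /Gext; under eq_bigr => ip _ do rewrite mulrDr; rewrite big_split /=.
congr (_ + _); under eq_bigr => ip _ do rewrite mulr_sumr.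
rewrite exchange_big /=; apply: eq_bigr => j _; rewrite mulr_sumr.
by apply: eq_bigr => ip _; ring.
Qed.

Lemma pareto_eq (R : realType) (V : finType) (E : rel V) (I : finType) (s t : I -> V)
  (d : I -> R) (J : finType) (g : PT E s t -> J -> R) (B : J -> R)
  (hB : pareto_minimal d g B) x (hx : feasible d x) (hr : respects g B x) :
  forall j, Gext g x j = B j.
Proof.
have -> // : Gext g x = B.
apply: hB.2 => //; by exists x; split => // j.
Qed.


Lemma forward (R : realType) (V : finType) (E : rel V) (I : finType)
  (s t : I -> V) (d : I -> R) (hd : forall i, 0 < d i)
  (J : finType) (g : PT E s t -> J -> R)
  (tau : PT E s t -> flow R E s t -> R) (Phi : flow R E s t -> R)
  (hpot : is_potential d tau Phi) (hconv : convex_fun Phi)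
  (B : J -> R) (hB : pareto_minimal d g B)
  (x : flow R E s t) (hx : feasible d x) :
  (implementable d g tau x /\ respects g B x) -> optimal d g Phi B x.
Proof.
move=> [[lam [lam0 [_ hWE]]] hr]; split => //; split => // y hy hry.
have GB := pareto_eq hB hx hr.
have W := wardrop hd hx hy (hWE) .
rewrite !cost_sum in W.
have Hl : \sum_j lam j * Gext g y j <= \sum_j lam j * Gext g x j.
  by apply: ler_sum => j _; rewrite GB; apply: ler_wpM2l.
have key : 0 <= \sum_ip fx (y - x) ip * tau ip x.
  have -> : \sum_ip fx (y - x) ip * tau ip x =
     \sum_ip fx y ip * tau ip x - \sum_ip fx x ip * tau ip x.
    rewrite -sumrB; apply: eq_bigr => ip _; rewrite /fx !mxE; ring.
  lra.
have := @conv_grad R _ Phi x y hconv (hpot.1 x).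
rewrite (Dsum hpot hx); lra.
Qed.

Lemma sumNl (R : realType) (T : finType) (F G : T -> R) :
  \sum_i - F i * G i = - \sum_i F i * G i.
Proof. by rewrite -sumrN; apply: eq_bigr => i _; rewrite mulNr. Qed.

Lemma sum_mulA (R : realType) (T : finType) (a : R) (F G : T -> R) :
  \sum_i (a * F i) * G i = a * \sum_i F i * G i.
Proof. by rewrite mulr_sumr; apply: eq_bigr => i _; rewrite mulrA. Qed.

Lemma backward (R : realType) (V : finType) (E : rel V) (I : finType)
  (s t : I -> V) (d : I -> R) (hd : forall i, 0 < d i)
  (J : finType) (g : PT E s t -> J -> R)
  (tau : PT E s t -> flow R E s t -> R) (Phi : flow R E s t -> R)
  (hpot : is_potential d tau Phi) (hconv : convex_fun Phi)
  (B : J -> R) (hB : pareto_minimal d g B)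
  (x : flow R E s t) (hx : feasible d x) :
  optimal d g Phi B x -> implementable d g tau x.
Proof.
move=> [_ [hr hopt]].
have GB := pareto_eq hB hx hr.
have VI : forall v : flow R E s t,
  (forall i, \sum_ip (com ip == i)%:R * fx v ip = 0) ->
  (forall ip, fx x ip = 0 -> 0 <= fx v ip) ->
  (forall j, \sum_ip g ip j * fx v ip <= 0) ->
  0 <= \sum_ip fx v ip * tau ip x.
  move=> v h1 h2 h3; rewrite -(Dsum hpot hx v).
  pose S := \sum_ip `|fx v ip| / fx x ip.
  have S0 : 0 <= S by apply: sumr_ge0 => ip _; apply: divr_ge0 => //; exact: hx.1.
  apply: (@dir_ge _ _ Phi x v 0 (1 + S)^-1 (hpot.1 x)); first by rewrite invr_gt0; lra.
  move=> tt /andP [t0 t1].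
  have tS : tt * (1 + S) < 1 by rewrite -ltr_pdivlMr ?div1r //; lra.
  have fxt : forall ip, fx (x + tt *: v) ip = fx x ip + tt * fx v ip.
    by move=> ip; rewrite /fx !mxE.
  have feas : feasible d (x + tt *: v).
    split.
      move=> ip; rewrite fxt; have [x0|xp] := eqVneq (fx x ip) 0.
        rewrite x0 add0r; apply: mulr_ge0; [lra| exact: h2].
      have xpos : 0 < fx x ip by rewrite lt_def xp hx.1.
      have hterm : `|fx v ip| / fx x ip <= S.
        rewrite /S (bigD1 ip) //= lerDl; apply: sumr_ge0 => iq _.
        by apply: divr_ge0 => //; exact: hx.1.
      have e1 : `|fx v ip| / fx x ip * fx x ip = `|fx v ip| by rewrite divfK.
      have e2 : - `|fx v ip| <= fx v ip by exact: lerNnormlW (le_refl _).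
      set r := `|fx v ip| / fx x ip in hterm e1.
      have h4 : tt * r <= tt * S by apply: ler_wpM2l => //; lra.
      have h5 : 0 <= fx x ip * (1 - tt * r) by apply: mulr_ge0; lra.
      have h6 : 0 <= tt * (fx v ip + `|fx v ip|) by apply: mulr_ge0; lra.
      rewrite -e1 in h6; lra.
    move=> i; rewrite (eq_bigr _ (fun ip _ => fxt ip)) big_split /= -mulr_sumr hx.2.
    by have := h1 i; rewrite -sum_ind => ->; rewrite mulr0 addr0.
  have resp : respects g B (x + tt *: v).
    move=> j.
    have -> : Gext g (x + tt *: v) j = Gext g x j + tt * \sum_ip g ip j * fx v ip.
      by rewrite /Gext mulr_sumr -big_split; apply: eq_bigr => ip _; rewrite fxt /=; ring.
    rewrite GB; have : tt * \sum_ip g ip j * fx v ip <= 0.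
      by apply: mulr_ge0_le0; [lra | exact: h3].
    lra.
  have hle := hopt _ feas resp.
  apply: mulr_ge0; [rewrite invr_ge0; lra | lra].
pose K : finType := ((I + I) + PT E s t + J)%type.
pose w (k : K) (ip : PT E s t) : R := match k with
   | inl (inl (inl i)) => (com ip == i)%:R
   | inl (inl (inr i)) => - (com ip == i)%:R
   | inl (inr iq) => (fx x iq == 0)%:R * (ip == iq)%:R
   | inr j => - g ip j end.
pose af (k : K) (v : flow R E s t) := \sum_ip w k ip * fx v ip.
pose c (v : flow R E s t) := \sum_ip tau ip x * fx v ip.
have HF : forall v : flow R E s t, (forall k : 'I_#|K|, 0 <= af (enum_val k) v) -> 0 <= c v.
  move=> v Hk.
  have Hk' : forall kk : K, 0 <= af kk v.
    by move=> kk; rewrite -(enum_rankK kk); exact: Hk.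
  have : 0 <= \sum_ip fx v ip * tau ip x.
    apply: VI.
    - move=> i.
      have a : 0 <= \sum_ip (com ip == i)%:R * fx v ip := Hk' (inl (inl (inl i))).
      have b : 0 <= \sum_ip - (com ip == i)%:R * fx v ip := Hk' (inl (inl (inr i))).
      rewrite sumNl in b; lra.
    - move=> ip x0.
      have a : 0 <= \sum_q ((fx x ip == 0)%:R * (q == ip)%:R) * fx v q := Hk' (inl (inr ip)).
      by rewrite sum_mulA sum_eq1 x0 eqxx mul1r in a.
    - move=> j.
      have a : 0 <= \sum_ip - g ip j * fx v ip := Hk' (inr j).
      rewrite sumNl in a; lra.
  by rewrite /c; under eq_bigr => ip _ do rewrite mulrC.
have [mu [mu0 Hmu]] := @farkas R (flow R E s t) #|K| (fun k => af (enum_val k)) c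
   (fun k => lin_sum _) (lin_sum _) HF.
pose m' (kk : K) := mu (enum_rank kk).
have Ht : forall iq, tau iq x = \sum_(kk : K) m' kk * w kk iq.
  move=> iq; have := Hmu (unitv R iq); rewrite /c sum_unit => ->.
  rewrite (reindex (@enum_rank K)) /=; last first.
    by exists enum_val => i _; [exact: enum_rankK | exact: enum_valK].
  by apply: eq_bigr => kk _; rewrite enum_rankK /af sum_unit.
pose lam (j : J) := m' (inr j).
pose nu (q : PT E s t) := m' (inl (inr q)).
pose A (ci : I) := \sum_i m' (inl (inl (inl i))) * (ci == i)%:R
                 + \sum_i m' (inl (inl (inr i))) * - (ci == i)%:R.
have Ecost : forall iq, cost g tau lam iq x = A (com iq) + (fx x iq == 0)%:R * nu iq.
  move=> iq; rewrite /cost Ht !big_sumType /=.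
  have E3 : \sum_q m' (inl (inr q)) * ((fx x q == 0)%:R * (iq == q)%:R) = (fx x iq == 0)%:R * nu iq.
    rewrite -[RHS](sum_eq1 (fun q => (fx x q == 0)%:R * nu q) iq).
    by apply: eq_bigr => q _; rewrite /nu [q == iq]eq_sym; ring.
  have E4 : \sum_j m' (inr j) * - g iq j = - \sum_j lam j * g iq j.
    by rewrite -sumrN; apply: eq_bigr => j _; rewrite /lam mulrN.
  rewrite E3 E4 /A; ring.
exists lam; split; first by move=> j; exact: mu0.
split => // ip iq hc xp.
rewrite !Ecost hc (gt_eqF xp) mul0r addr0 lerDl.
by apply: mulr_ge0 => //; exact: mu0.
Qed.

Unset Implicit Arguments. Set Strict Implicit.

Theorem lemma4p4 (R : realType) (V : finType) (E : rel V) (I : finType)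
  (s t : I -> V) (d : I -> R) (hd : forall i, 0 < d i)
  (J : finType) (g : PT E s t -> J -> R) (hg : forall ip j, 0 <= g ip j)
  (tau : PT E s t -> flow R E s t -> R) (Phi : flow R E s t -> R)
  (hpot : is_potential d tau Phi) (hconv : convex_fun Phi)
  (B : J -> R) (hB : pareto_minimal d g B)
  (x : flow R E s t) (hx : feasible d x) :
  (implementable d g tau x /\ respects g B x) <-> optimal d g Phi B x.
Proof.
split; first exact: (forward hd hpot hconv hB hx).
move=> H; split; first exact: (backward hd hpot hconv hB hx H).
by case: H => _ [].
Qed.
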